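(* Consider the sequences $(x_k),(y_k),(\nu_k),(\lambda_k)$ generated by Algorithm 2 (described in the context), and let $A$, $K$ and $(i_k)$ be as defined in the context. Set $\sigma:=\frac{2\hat\theta}{\eta L}$. Then $\sigma<1$ and, for all $k\in K$, $$\nu_{i_k}\in N_C(y_{i_k}),$$ $$\big\|\lambda_{i_k}(F(y_{i_k})+\nu_{i_k})+y_{i_k}-x_{i_{k-1}}\big\|\le\sigma\|y_{i_k}-x_{i_{k-1}}\|,$$ $$\lambda_{i_k}\|y_{i_k}-x_{i_{k-1}}\|\ge\eta,$$ $$x_{i_k}=x_{i_{k-1}}-\tau\lambda_{i_k}(F(y_{i_k})+\nu_{i_k}).$$ Consequently, the sequences $(x_{i_k})_{k\in K}$, $(y_{i_k})_{k\in K}$, $(\lambda_{i_k})_{k\in K}$ (with $x_{i_0}=x_0$) are generated by the large-step under-relaxed HPE method (Algorithm 1 in the context) with parameters $\tau$, $\sigma$, $\eta$ and $N=\#A$.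
   Context: Setting: $\mathcal H$ real Hilbert space; $C\subseteq\mathcal H$ nonempty closed convex; $N_C(x)=\{\nu:\langle\nu,y-x\rangle\le0\ \forall y\in C\}$ if $x\in C$, $N_C(x)=\emptyset$ otherwise. $F:C\to\mathcal H$ is monotone, continuously differentiable, and $\|F'(x)-F'(y)\|\le L\|x-y\|$ for all $x,y\in C$, with $L>0$; the set of $x$ with $0\in F(x)+N_C(x)$ is nonempty. For $y\in C$, $F_y(x):=F(y)+F'(y)(x-y)$. Parameters: $0\le\hat\sigma<1/2$; $0<\theta<(1-\hat\sigma)(1-2\hat\sigma)$; $\hat\theta:=\theta\big(\frac{\hat\sigma}{1-\hat\sigma}+\frac{\theta}{(1-\hat\sigma)^2}\big)$; $\eta>2\hat\theta/L$; $\tau:=\dfrac{2(\theta-\hat\theta)}{2\theta+\frac{\eta L}{2}+\sqrt{(2\theta+\frac{\eta L}{2})^2-4\theta(\theta-\hat\theta)}}$ (one has $0<\tau<1$). Algorithm 2: input $x_0\in C$, $y_0:=x_0$, $\nu_0:=0$, $\lambda_1>0$ with $\lambda_1^2\|F(y_0)\|\le2\theta/L$. For $k=1,2,\dots$: if $F(y_{k-1})+\nu_{k-1}=0$, stop and return $y_{k-1}$. If $\frac{\lambda_kL}{2}\|\lambda_k(F(y_{k-1})+\nu_{k-1})+y_{k-1}-x_{k-1}\|\le\hat\theta$, set $y_k=y_{k-1}$, $\nu_k=\nu_{k-1}$; otherwise find any $(y_k,\nu_k)$ with $\nu_k\in N_C(y_k)$ and $\|\lambda_k(F_{y_{k-1}}(y_k)+\nu_k)+y_k-x_{k-1}\|\le\hat\sigma\|y_k-y_{k-1}\|$.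 Then, if $\lambda_k\|y_k-x_{k-1}\|\ge\eta$, set $x_k=x_{k-1}-\tau\lambda_k(F(y_k)+\nu_k)$ and $\lambda_{k+1}=(1-\tau)\lambda_k$; else set $x_k=x_{k-1}$ and $\lambda_{k+1}=\lambda_k/(1-\tau)$. Standing assumption: the algorithm never stops at the first test, i.e. $F(y_{k-1})+\nu_{k-1}\neq0$ for all $k$. Index sets: $A=\{k\ge1:\lambda_k\|y_k-x_{k-1}\|\ge\eta\}$; $K=\{k\ge1: k\le\#A\}$; $i_0=0$ and $i_k$ is the $k$-th element of $A$ (in increasing order), so $A=\{i_k:k\in K\}$. Algorithm 1 (large-step under-relaxed HPE method) with input $x_0\in\mathcal H$, $0<\tau<1$, $0\le\sigma<1$, $\eta>0$, $N\in\mathbb N\cup\{\infty\}$: for $k=1,\dots,N$, choose $\lambda_k>0$ and $y_k\in\mathcal H$, $\nu_k\in N_C(y_k)$ with $\|\lambda_k(F(y_k)+\nu_k)+y_k-x_{k-1}\|\le\sigma\|y_k-x_{k-1}\|$ and $\lambda_k\|y_k-x_{k-1}\|\ge\eta$, and set $x_k=x_{k-1}-\tau\lambda_k(F(y_k)+\nu_k)$. *)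

(* Defs.v *)
From HB Require Import structures.
From mathcomp Require Import all_boot all_order all_algebra.
From mathcomp Require Import all_classical all_reals all_analysis.
Set Implicit Arguments. Unset Strict Implicit. Unset Printing Implicit Defensive.
Import Order.TTheory GRing.Theory Num.Theory.
Local Open Scope classical_set_scope.
Local Open Scope ring_scope.

Section Defs.
Variables (R : realType) (V : completeNormedModType R).

(* ip is an inner product on V inducing the norm of V; together with the
   completeness of V, (V, ip) is a real Hilbert space. *)
Definition is_inner_product (ip : V -> V -> R) : Prop :=
  [/\ (forall x y, ip x y = ip y x),
      (forall (a : R) x y z, ip (a *: x + y) z = a * ip x z + ip y z) &
      (forall x, ip x x = `|x| ^+ 2)].

Definition convex_set_V (C : set V) : Prop :=
  forall x y (t : R), C x -> C y -> 0 <= t -> t <= 1 -> C (t *: x + (1 - t) *: y).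

Definition normal_cone (ip : V -> V -> R) (C : set V) (x : V) : set V :=
  [set nu | C x /\ forall y, C y -> ip nu (y - x) <= 0].

Definition monotone_on (ip : V -> V -> R) (C : set V) (F : V -> V) : Prop :=
  forall x y, C x -> C y -> 0 <= ip (F x - F y) (x - y).

Definition bounded_linear_on (C : set V) (F' : V -> V -> V) : Prop :=
  forall y, C y ->
    (forall (a : R) u v, F' y (a *: u + v) = a *: F' y u + F' y v) /\
    exists M : R, forall v, `|F' y v| <= M * `|v|.

Definition frechet_deriv_on (C : set V) (F : V -> V) (F' : V -> V -> V) : Prop :=
  forall y, C y -> forall e : R, 0 < e -> exists d : R, 0 < d /\
    forall x, C x -> `|x - y| < d ->
      `|F x - F y - F' y (x - y)| <= e * `|x - y|.

Definition deriv_continuous_on (C : set V) (F' : V -> V -> V) : Prop :=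
  forall y, C y -> forall e : R, 0 < e -> exists d : R, 0 < d /\
    forall x, C x -> `|x - y| < d -> forall v, `|F' x v - F' y v| <= e * `|v|.

Definition deriv_lipschitz_on (C : set V) (F' : V -> V -> V) (L : R) : Prop :=
  forall x y, C x -> C y -> forall v, `|F' x v - F' y v| <= L * `|x - y| * `|v|.

Definition Flin (F : V -> V) (F' : V -> V -> V) (y x : V) : V := F y + F' y (x - y).

End Defs.

Definition thetahat (R : realType) (sigmah theta : R) : R :=
  theta * (sigmah / (1 - sigmah) + theta / (1 - sigmah) ^+ 2).

Definition tau_param (R : realType) (sigmah theta eta L : R) : R :=
  let th := thetahat sigmah theta in
  2 * (theta - th) /
  (2 * theta + eta * L / 2 +
   Num.sqrt ((2 * theta + eta * L / 2) ^+ 2 - 4 * theta * (theta - th))).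

(* Algorithm 2 (sequences x, y, nu : nat -> V, lam : nat -> R; lam 0 unused).
   Step k+1 of the paper is written with indices k (previous) and k.+1. *)
Definition Alg2_run (R : realType) (V : completeNormedModType R)
  (ip : V -> V -> R) (C : set V) (F : V -> V) (F' : V -> V -> V)
  (L sigmah theta eta : R)
  (x y nu : nat -> V) (lam : nat -> R) : Prop :=
  let th := thetahat sigmah theta in
  let tau := tau_param sigmah theta eta L in
  [/\ [/\ C (x 0%N), y 0%N = x 0%N & nu 0%N = 0],
      [/\ 0 < lam 1%N & lam 1%N ^+ 2 * `|F (y 0%N)| <= 2 * theta / L],
      (forall k : nat,
         let test := lam k.+1 * L / 2 *
                     `|lam k.+1 *: (F (y k) + nu k) + y k - x k| <= th in
         (test -> y k.+1 = y k /\ nu k.+1 = nu k) /\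
         (~ test -> normal_cone ip C (y k.+1) (nu k.+1) /\
            `|lam k.+1 *: (Flin F F' (y k) (y k.+1) + nu k.+1) + y k.+1 - x k|
              <= sigmah * `|y k.+1 - y k|)) &
      (forall k : nat,
         (eta <= lam k.+1 * `|y k.+1 - x k| ->
            x k.+1 = x k - (tau * lam k.+1) *: (F (y k.+1) + nu k.+1) /\
            lam k.+2 = (1 - tau) * lam k.+1) /\
         (~ (eta <= lam k.+1 * `|y k.+1 - x k|) ->
            x k.+1 = x k /\ lam k.+2 = lam k.+1 / (1 - tau)))].

Definition setA (R : realType) (V : completeNormedModType R)
  (eta : R) (x y : nat -> V) (lam : nat -> R) : set nat :=
  [set k | (1 <= k)%N /\ eta <= lam k * `|y k - x k.-1|].

(* K = {k >= 1 : k <= #A}, where k <= #A means A has at least k elements *)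
Definition setK (A : set nat) : set nat :=
  [set k | (1 <= k)%N /\ (`I_k #<= A)%card].

(* i_0 = 0, i_{k+1} = the least element of A greater than i_k
   (so i_k is the k-th element of A for k in K) *)
Fixpoint enumA (A : set nat) (k : nat) : nat :=
  match k with
  | 0 => 0%N
  | k'.+1 => let p := enumA A k' in
      xget 0%N [set n | A n /\ (p < n)%N /\ forall m, (p < m)%N -> (m < n)%N -> ~ A m]
  end.

(* Algorithm 1 (large-step under-relaxed HPE), parameters tau sigma eta,
   iterations indexed by the set Idx = {1, ..., N} (N possibly infinite). *)
Definition Alg1_run (R : realType) (V : completeNormedModType R)
  (ip : V -> V -> R) (C : set V) (F : V -> V)
  (x0 : V) (tau sigma eta : R) (Idx : set nat)
  (x y nu : nat -> V) (lam : nat -> R) : Prop :=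
  [/\ 0 < tau < 1, 0 <= sigma < 1, 0 < eta, x 0%N = x0 &
      forall k, Idx k ->
        [/\ 0 < lam k, normal_cone ip C (y k) (nu k),
            `|lam k *: (F (y k) + nu k) + y k - x k.-1| <= sigma * `|y k - x k.-1|,
            eta <= lam k * `|y k - x k.-1| &
            x k = x k.-1 - (tau * lam k) *: (F (y k) + nu k)]].

(* Main.v *)
Require Import Defs.
From HB Require Import structures.
From mathcomp Require Import all_boot all_order all_algebra.
From mathcomp Require Import all_classical all_reals all_analysis.
From mathcomp Require Import ring lra.
Import Order.TTheory GRing.Theory Num.Theory.
Local Open Scope classical_set_scope.
Local Open Scope ring_scope.

Module Helpers.
Import numFieldNormedType.Exports.
Local Set Implicit Arguments. Local Unset Strict Implicit.
Section IP.
Variables (R : realType) (V : completeNormedModType R) (ip : V -> V -> R).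
Hypothesis hip : is_inner_product ip.

Lemma ipC u v : ip u v = ip v u.
Proof. by case: hip. Qed.
Lemma ip0l v : ip 0 v = 0.
Proof. case: hip => _ h _; have := h 1 0 0 v; rewrite scale1r addr0 mul1r; lra. Qed.
Lemma ipZl a u v : ip (a *: u) v = a * ip u v.
Proof. case: hip => _ h _; have := h a u 0 v; rewrite addr0 ip0l addr0 //. Qed.
Lemma ipDl u w v : ip (u + w) v = ip u v + ip w v.
Proof. by case: hip => _ h _; have := h 1 u w v; rewrite scale1r mul1r. Qed.
Lemma ipNl u v : ip (- u) v = - ip u v.
Proof. by rewrite -scaleN1r ipZl mulN1r. Qed.
Lemma ipBl u w v : ip (u - w) v = ip u v - ip w v.
Proof. by rewrite ipDl ipNl. Qed.
Lemma ipZr a u v : ip u (a *: v) = a * ip u v.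
Proof. by rewrite ipC ipZl ipC. Qed.
Lemma ipDr u w v : ip v (u + w) = ip v u + ip v w.
Proof. by rewrite ipC ipDl ipC (ipC w). Qed.
Lemma ipNr u v : ip v (- u) = - ip v u.
Proof. by rewrite ipC ipNl ipC. Qed.
Lemma ipBr u w v : ip v (u - w) = ip v u - ip v w.
Proof. by rewrite ipDr ipNr. Qed.
Lemma ipn u : ip u u = `|u| ^+ 2.
Proof. by case: hip. Qed.

Lemma ip_le u v : ip u v <= `|u| * `|v|.
Proof.
set w := `|v| *: u - `|u| *: v.
have h0 : 0 <= ip w w by rewrite ipn sqr_ge0.
rewrite /w ipBl !ipBr !ipZl !ipZr !ipn (ipC v u) in h0.
have nu := normr_ge0 u; have nv := normr_ge0 v.
have [uv0|uvp] := eqVneq (`|u| * `|v|) 0.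
  move: uv0 => /eqP; rewrite mulf_eq0 => /orP[] /eqP /normr0_eq0 ->;
  by rewrite ?ip0l ?(ipC u 0) ?ip0l normr0 ?mul0r ?mulr0.
have p : 0 < `|u| * `|v| by rewrite lt_def uvp mulr_ge0.
nra.
Qed.

Lemma ip_abs u v : `|ip u v| <= `|u| * `|v|.
Proof.
rewrite ler_norml ip_le andbT.
have := ip_le (- u) v; rewrite ipNl normrN; lra.
Qed.
End IP.
Section Real.
Variable R : realType.

Lemma scaleRE (a b : R) : a *: (b : (R : normedModType R)) = a * b.
Proof. by []. Qed.

Lemma is_derive_eps (f : R -> R) x D :
 (forall e, 0 < e -> exists2 d, 0 < d & forall h, h != 0 -> `|h| < d ->
    `|f (h + x) - f x - h * D| <= e * `|h|) -> is_derive x 1 f D.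
Proof.
move=> H.
suff : derivable f x 1 /\ 'D_1 f x = D by case=> ??; apply: DeriveDef.
rewrite /derivable /derive.
match goal with |- cvg ?G /\ _ => suff cv : G --> (D : R^o) end.
  by split; [exact: cvgP cv | exact: cvg_lim cv].
apply/cvgrPdist_le => e e0.
have [d d0 Hd] := H e e0.
near=> h.
have hn : h != 0.
  near: h. exact: withinT.
have hd : `|h| < d by near: h; exact: dnbhs0_lt.
have := Hd h hn hd.
have hp : 0 < `|h| by rewrite normr_gt0.
move=> hh.
rewrite -(ler_pM2r hp); apply: le_trans hh; rewrite le_eqVlt; apply/orP; left; apply/eqP.
rewrite -normrM -normrN; congr (`| _ |).
rewrite /=.
rewrite (_ : h *: (1 : (R : normedModType R)) = h); last by rewrite [LHS]mulr1.
rewrite scaleRE.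
by field.
Unshelve. all: by end_near.
Qed.
End Real.
Section Real2.
Variable R : realType.

Lemma cont_eps (f : R -> R) x :
  (forall e, 0 < e -> exists2 d, 0 < d & forall s, `|s - x| < d -> `|f s - f x| <= e) ->
  {for x, continuous f}.
Proof.
move=> H; apply/cvgrPdist_le => e e0.
have [d d0 Hd] := H e e0.
apply/nbhs_normP; exists d => // s /= hs.
by rewrite distrC; apply: Hd; rewrite distrC.
Qed.

Definition clamp (t : R) : R := if t < 0 then 0 else if 1 < t then 1 else t.

Lemma clamp_id t : 0 <= t -> t <= 1 -> clamp t = t.
Proof.
move=> h0 h1; rewrite /clamp; case: ifP => [|_]; first by rewrite ltNge h0.
by case: ifP => //; rewrite ltNge h1.
Qed.

Lemma clamp_lip s t : `|clamp s - clamp t| <= `|s - t|.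
Proof.
have h1 : s - t <= `|s - t| := ler_norm _.
have h2 : t - s <= `|s - t| by rewrite distrC ler_norm.
rewrite /clamp; case: (ltP s 0) => hs; case: (ltP t 0) => ht;
 try case: (ltP 1 s) => hs1; try case: (ltP 1 t) => ht1;
 rewrite /= ler_norml; apply/andP; split; lra.
Qed.

Lemma real_decr (g D : R -> R) :
 (forall t, 0 <= t -> t <= 1 -> forall e, 0 < e -> exists2 d, 0 < d &
    forall s, 0 <= s -> s <= 1 -> `|s - t| < d ->
      `|g s - g t - (s - t) * D t| <= e * `|s - t|) ->
 (forall t, 0 < t -> t < 1 -> D t <= 0) -> g 1 <= g 0.
Proof.
move=> H HD.
set G := fun t => g (clamp t).
have clamp01 t : 0 <= clamp t /\ clamp t <= 1.
  rewrite /clamp; case: (ltP t 0) => ht; first by rewrite lexx ler01.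
  by case: (ltP 1 t) => ht1; [rewrite ler01 lexx | split].
have cG : continuous G.
  move=> x; apply: cont_eps => e e0.
  have [t0 t1] := clamp01 x.
  have [d' d'0 Hd] := H _ t0 t1 1 ltr01.
  have De : 0 < e / (`|D (clamp x)| + 1) by rewrite divr_gt0 // ltr_pwDr.
  exists (Num.min d' (e / (`|D (clamp x)| + 1))); first by rewrite lt_min d'0 De.
  move=> s; rewrite lt_min => /andP[sd1 sd2].
  have cl := clamp_lip s x.
  have [s0 s1] := clamp01 s.
  have := Hd _ s0 s1 (le_lt_trans cl sd1); rewrite mul1r => hh.
  rewrite /G.
  set u := clamp s - clamp x in hh cl *.
  have e1 : `|g (clamp s) - g (clamp x)| <= `|u| + `|u * D (clamp x)|.
    have -> : g (clamp s) - g (clamp x) = (g (clamp s) - g (clamp x) - u * D (clamp x)) + u * D (clamp x) by rewrite subrK.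
    by apply: le_trans (ler_normD _ _) _; rewrite lerD2r.
  apply: le_trans e1 _; rewrite normrM.
  have nu : `|u| <= e / (`|D (clamp x)| + 1) by apply: ltW; apply: le_lt_trans cl sd2.
  have np := normr_ge0 (D (clamp x)).
  rewrite ler_pdivlMr ?ltr_pwDr // in nu.
  nra.
have dG : forall c : R, c \in `]0, 1[ -> is_derive c 1 G (D c).
  move=> c; rewrite in_itv /= => /andP[c0 c1].
  apply: is_derive_eps => e e0.
  have [d' d'0 Hd] := H _ (ltW c0) (ltW c1) e e0.
  exists (Num.min d' (Num.min c (1 - c))); first by rewrite !lt_min d'0 c0 subr_gt0 c1.
  move=> h hn; rewrite !lt_min => /andP[hd /andP[hc hc1]].
  have hl : h <= `|h| := ler_norm h.
  have hl' : - h <= `|h| by rewrite -normrN ler_norm.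
  rewrite /G !clamp_id; try lra.
  have := Hd (h + c); rewrite addrK; apply; lra.
have [c cin eq] := MVT ltr01 dG (continuous_subspaceT cG).
have : G 1 - G 0 <= 0.
  rewrite eq subr0 mulr1; move: cin; rewrite in_itv /= => /andP[c0 c1]; exact: HD.
by rewrite /G !clamp_id ?lexx ?ler01 // subr_le0.
Qed.
End Real2.
Section Taylor.
Variables (R : realType) (V : completeNormedModType R) (ip : V -> V -> R).
Variables (C : set V) (F : V -> V) (F' : V -> V -> V) (L : R).
Hypothesis hip : is_inner_product ip.
Hypothesis hconv : convex_set_V C.
Hypothesis hlin : bounded_linear_on C F'.
Hypothesis hfr : frechet_deriv_on C F F'.
Hypothesis hlip : deriv_lipschitz_on C F' L.
Hypothesis L0 : 0 < L.

Lemma F'0 y : C y -> F' y 0 = 0.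
Proof.
move=> Cy; have [lin _] := @hlin y Cy.
have h := lin 1 0 0; rewrite !scale1r addr0 in h.
have : F' y 0 + F' y 0 - F' y 0 = F' y 0 - F' y 0 by rewrite -h.
by rewrite addrK subrr.
Qed.

Lemma F'Z y a u : C y -> F' y (a *: u) = a *: F' y u.
Proof.
move=> Cy; have [lin _] := @hlin y Cy.
by have := lin a u 0; rewrite !addr0 F'0 // addr0.
Qed.

Definition seg (y y' : V) (t : R) := y + t *: (y' - y).

Lemma seg_in y y' t : C y -> C y' -> 0 <= t -> t <= 1 -> C (seg y y' t).
Proof.
move=> Cy Cy' t0 t1; have := @hconv y' y t Cy' Cy t0 t1.
by rewrite /seg scalerBl scale1r scalerBr addrCA.
Qed.

Lemma seg_sub y y' s t : seg y y' s - seg y y' t = (s - t) *: (y' - y).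
Proof. by rewrite /seg opprD addrACA subrr add0r scalerBl. Qed.

Lemma seg0 y y' : seg y y' 0 = y.
Proof. by rewrite /seg scale0r addr0. Qed.

Lemma seg1 y y' : seg y y' 1 = y'.
Proof. by rewrite /seg scale1r addrCA subrr addr0. Qed.

Lemma F'mono y y' : monotone_on ip C F -> C y -> C y' ->
  0 <= ip (F' y (y' - y)) (y' - y).
Proof.
move=> hmon Cy Cy'; set d := y' - y; set a := ip (F' y d) d.
rewrite leNgt; apply/negP => a0.
have dn : 0 < `|d|.
  rewrite normr_gt0; apply/negP => /eqP d0.
  by move: a0; rewrite /a d0 (ipC hip) (ip0l hip) ltxx.
set e := - a / (2 * `|d| ^+ 2).
have e0 : 0 < e by rewrite /e divr_gt0 // ?oppr_gt0 // mulr_gt0 // exprn_gt0.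
have [dl [dl0 Hdl]] := @hfr y Cy e e0.
set t := Num.min 1 (dl / (2 * (`|d| + 1))).
have tp : 0 < t by rewrite lt_min ltr01 divr_gt0 // mulr_gt0 // ltr_pwDr.
have t1 : t <= 1 by rewrite ge_min lexx.
have t2 : t <= dl / (2 * (`|d| + 1)) by rewrite ge_min lexx orbT.
have Cz := seg_in Cy Cy' (ltW tp) t1.
have zy : seg y y' t - y = t *: d by rewrite -{2}(seg0 y y') seg_sub subr0.
have nzy : `|seg y y' t - y| = t * `|d| by rewrite zy normrZ gtr0_norm.
have hlt : `|seg y y' t - y| < dl.
  rewrite nzy; rewrite ler_pdivlMr ?mulr_gt0 ?ltr_pwDr // in t2.
  have dd : 0 <= `|d| := normr_ge0 d.
  nra.
have He := Hdl _ Cz hlt.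
have hm := hmon _ _ Cz Cy.
set err := F (seg y y' t) - F y - F' y (seg y y' t - y) in He.
have eqF : F (seg y y' t) - F y = err + t *: F' y d.
  by rewrite /err zy F'Z // subrK.
rewrite eqF zy (ipZr hip) (ipDl hip) (ipZl hip) -/a in hm.
have ce := ip_le hip err d.
rewrite nzy in He.
have : e * `|d| ^+ 2 = - a / 2.
  by rewrite /e; field; rewrite gt_eqF.
have en : 0 <= `|err| := normr_ge0 _.
have dd : 0 <= `|d| := normr_ge0 d.
move=> ee.
have h1 : 0 <= ip err d + t * a by rewrite -(pmulr_rge0 _ tp).
have h2 : `|err| * `|d| <= e * (t * `|d|) * `|d| by apply: ler_wpM2r.
have h3 : e * (t * `|d|) * `|d| = t * (- a / 2) by rewrite -ee; ring.
have h4 : t * a < 0 by rewrite pmulr_rlt0.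
lra.
Qed.

Lemma taylor y y' : C y -> C y' ->
  `|F y' - F y - F' y (y' - y)| <= L / 2 * `|y' - y| ^+ 2.
Proof.
move=> Cy Cy'.
set d := y' - y. set E := F y' - F y - F' y d.
set K := `|d| ^+ 2 * `|E|.
have K0 : 0 <= K by rewrite mulr_ge0 // exprn_ge0.
have dd : 0 <= `|d| := normr_ge0 d.
have EE : 0 <= `|E| := normr_ge0 E.
pose g t := ip (F (seg y y' t)) E - t * ip (F' y d) E - L / 2 * t ^+ 2 * K.
pose D t := ip (F' (seg y y' t) d) E - ip (F' y d) E - L * t * K.
have key : g 1 <= g 0.
  apply: (@real_decr _ g D).
  - move=> t t0 t1 e e0.
    have Czt := seg_in Cy Cy' t0 t1.
    set e' := e / (2 * (`|d| * `|E| + 1)).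
    have e'0 : 0 < e' by rewrite divr_gt0 // mulr_gt0 // ltr_pwDr // mulr_ge0.
    have [dl [dl0 Hdl]] := @hfr _ Czt e' e'0.
    set M := L * K + 1.
    have M0 : 0 < M by rewrite ltr_pwDr // mulr_ge0 // ltW.
    exists (Num.min (dl / (`|d| + 1)) (e / (2 * M))).
      by rewrite lt_min !divr_gt0 // ?mulr_gt0 // ltr_pwDr.
    move=> s s0 s1; rewrite lt_min => /andP[sd1 sd2].
    have Czs := seg_in Cy Cy' s0 s1.
    have zz := seg_sub y y' s t.
    have a0 : 0 <= `|s - t| := normr_ge0 _.
    have nzz : `|seg y y' s - seg y y' t| = `|s - t| * `|d| by rewrite zz normrZ.
    have hlt : `|seg y y' s - seg y y' t| < dl.
      rewrite nzz; rewrite ltr_pdivlMr ?ltr_pwDr // in sd1.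
      nra.
    have He := Hdl _ Czs hlt.
    set err := F (seg y y' s) - F (seg y y' t) - F' (seg y y' t) (seg y y' s - seg y y' t) in He.
    have heq : g s - g t - (s - t) * D t = ip err E - L / 2 * (s - t) ^+ 2 * K.
      rewrite /g /D /err zz (F'Z _ _ Czt) !(ipBl hip) (ipZl hip) /d.
set i1 := ip (F (seg y y' s)) E. set i2 := ip (F (seg y y' t)) E.
set i3 := ip (F' y (y' - y)) E. set i4 := ip (F' (seg y y' t) (y' - y)) E.
by field.
    rewrite heq.
    have ce := ip_abs hip err E.
    set a := `|s - t| in a0 nzz sd1 sd2 He *.
    have sq : (s - t) ^+ 2 = a ^+ 2 by rewrite /a real_normK // num_real.
    have b1 : `|ip err E - L / 2 * (s - t) ^+ 2 * K| <= `|err| * `|E| + L / 2 * a ^+ 2 * K.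
      apply: le_trans (ler_normB _ _) _; rewrite sq; apply: lerD => //.
      by rewrite ger0_norm // mulr_ge0 // mulr_ge0 ?exprn_ge0 // divr_ge0 // ltW.
    rewrite nzz in He.
    have b2 : `|err| * `|E| <= e' * (a * `|d|) * `|E| by apply: ler_wpM2r.
    have f1 : e' * (`|d| * `|E| + 1) = e / 2.
      by rewrite /e'; field; rewrite gt_eqF // ltr_pwDr // mulr_ge0.
    have b3 : e' * (a * `|d|) * `|E| <= a * (e / 2).
      have : e' * (`|d| * `|E|) <= e / 2 by rewrite -f1; apply: ler_wpM2l; [exact: ltW | lra].
      move=> h; have := ler_wpM2l a0 h; lra.
    have f2 : a * (2 * M) <= e by rewrite -ler_pdivlMr ?mulr_gt0 // ltW.
    have b4 : L / 2 * a ^+ 2 * K <= a * (e / 2).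
      have h : a * (L * K) <= a * M by apply: ler_wpM2l => //; rewrite /M; lra.
      have : L / 2 * a ^+ 2 * K = a * (a * (L * K)) / 2 by rewrite expr2; field.
      move=> ->. nra.
    lra.
  - move=> t t0 t1; rewrite /D.
    have Czt := seg_in Cy Cy' (ltW t0) (ltW t1).
    have h1 := ip_le hip (F' (seg y y' t) d - F' y d) E; rewrite (ipBl hip) in h1.
    have h2 := hlip Czt Cy d.
    have zy : `|seg y y' t - y| = t * `|d|.
      by rewrite -{2}(seg0 y y') seg_sub subr0 normrZ gtr0_norm.
    rewrite zy in h2.
    have h3 := ler_wpM2r EE h2.
    have : L * (t * `|d|) * `|d| * `|E| = L * t * K by rewrite /K expr2; ring.
    lra.
rewrite /g seg0 seg1 expr1n expr0n /= in key.
have : ip E E <= L / 2 * K.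
  rewrite {1}/E !(ipBl hip); lra.
rewrite (ipn hip) /K => h.
have [E0|En] := eqVneq `|E| 0.
  by rewrite E0 mulr_ge0 // ?exprn_ge0 // divr_ge0 // ltW.
have Ep : 0 < `|E| by rewrite lt_def En EE.
rewrite expr2 mulrA in h.
by rewrite -(ler_pM2r Ep).
Qed.
End Taylor.
Section Vec.
Variables (R : realType) (V : lmodType R).

Lemma vI1 (a : R) (A B N1 N0 Y1 Y0 X : V) :
  (a *: (A + B + N1) + Y1 - X) - (a *: (A + N0) + Y0 - X)
  = a *: (B + (N1 - N0)) + (Y1 - Y0).
Proof.
rewrite opprB addrA subrK opprD addrACA -scalerBr.
by rewrite -(addrA A B N1) opprD addrACA subrr add0r [B + (N1 - N0)]addrA.
Qed.

Lemma vI2 (a : R) (A B N1 Y1 X C1 : V) :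
  a *: (C1 + N1) + Y1 - X = (a *: (A + B + N1) + Y1 - X) + a *: (C1 - A - B).
Proof.
rewrite [RHS]addrAC [in RHS](addrAC (a *: _)) -scalerDr.
rewrite (addrC (A + B)) -(addrA C1) -opprD addrACA subrr addr0 (addrC N1 C1) //.
Qed.

Lemma vI3 (t l : R) (v Y X : V) :
  ((1 - t) * l) *: v + Y - (X - (t * l) *: v) = l *: v + Y - X.
Proof.
rewrite opprB addrA; congr (_ - _).
rewrite addrAC -scalerDl; congr (_ *: _ + _); ring.
Qed.

Lemma vI4 (c l : R) (v Y X : V) :
  (l * c) *: v + Y - X = c *: (l *: v + Y - X) + (1 - c) *: (Y - X).
Proof.
rewrite -!addrA scalerDr -addrA -scalerDl (addrC c) subrK scale1r scalerA (mulrC c) //.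
Qed.
End Vec.
Section Tau.
Variable R : realType.

Lemma thetahat_facts (sh th : R) : 0 <= sh -> sh < 1 / 2 -> 0 < th ->
  th < (1 - sh) * (1 - 2 * sh) ->
  [/\ 0 < thetahat sh th, thetahat sh th < th &
      thetahat sh th = sh * (th / (1 - sh)) + (th / (1 - sh)) ^+ 2].
Proof.
move=> sh0 sh1 th0 th1.
have q0 : 0 < 1 - sh by lra.
have e : thetahat sh th = th * ((sh * (1 - sh) + th) / (1 - sh) ^+ 2).
  by rewrite /thetahat; field; rewrite gt_eqF.
have q2 : 0 < (1 - sh) ^+ 2 by rewrite exprn_gt0.
split.
- rewrite e mulr_gt0 // divr_gt0 //; nra.
- rewrite e -[X in _ < X]mulr1 ltr_pM2l // ltr_pdivrMr // mul1r.
  rewrite expr2; nra.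
- by rewrite /thetahat; field; rewrite gt_eqF.
Qed.

Lemma tau_facts (sh th eta L : R) : 0 <= sh -> sh < 1 / 2 -> 0 < th ->
  th < (1 - sh) * (1 - 2 * sh) -> 0 < L -> 2 * thetahat sh th / L < eta ->
  [/\ 0 < eta, 0 < tau_param sh th eta L, tau_param sh th eta L < 1 &
      thetahat sh th + tau_param sh th eta L * eta * L / 2 <=
      th * (1 - tau_param sh th eta L) ^+ 2].
Proof.
move=> sh0 sh1 th0 th1 L0 he.
have [tt0 tt1 _] := thetahat_facts sh0 sh1 th0 th1.
set tt := thetahat sh th in tt0 tt1 he *.
have eta0 : 0 < eta by apply: lt_trans he; rewrite divr_gt0 // mulr_gt0.
rewrite /tau_param -/tt.
set b := 2 * th + eta * L / 2.
set q := th - tt.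
set Dd := b ^+ 2 - 4 * th * q.
have q0 : 0 < q by rewrite subr_gt0.
have eL : 0 < eta * L by rewrite mulr_gt0.
have Dd0 : 0 < Dd.
  have : Dd = (eta * L / 2) ^+ 2 + 4 * th * (eta * L / 2 + tt) by rewrite /Dd /b /q; ring.
  move=> ->; have := sqr_ge0 (eta * L / 2); have : 0 < 4 * th * (eta * L / 2 + tt) by rewrite mulr_gt0 ?mulr_gt0 //; lra.
  lra.
set sD := Num.sqrt Dd.
have sD0 : 0 <= sD := sqrtr_ge0 _.
have sD2 : sD ^+ 2 = Dd by rewrite sqr_sqrtr // ltW.
have b0 : 2 * th < b by rewrite /b; lra.
set u := b + sD.
have u0 : 0 < u by rewrite /u; lra.
set tau := 2 * q / u.
have tau0 : 0 < tau by rewrite /tau divr_gt0 // mulr_gt0.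
have qth : q < th by rewrite /q; lra.
have tau1 : tau < 1 by rewrite /tau ltr_pdivrMr // mul1r /u; lra.
split => //.
have key : th * tau ^+ 2 - b * tau + q = 0.
  have : th * tau ^+ 2 - b * tau + q = q * (sD ^+ 2 - Dd) / u ^+ 2.
    by rewrite /tau /Dd /u; field; rewrite gt_eqF.
  by rewrite sD2 subrr mulr0 mul0r.
have : th * (1 - tau) ^+ 2 - (tt + tau * eta * L / 2) = th * tau ^+ 2 - b * tau + q.
  by rewrite /b /q; ring.
rewrite key => h; rewrite -subr_ge0 h //.
Qed.
End Tau.
Section Enum.
Variable A : set nat.
Hypothesis A0 : ~ A 0%N.

Lemma enum_step j : (exists n, A n /\ (enumA A j < n)%N) ->
  [/\ A (enumA A j.+1), (enumA A j < enumA A j.+1)%N &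
      forall m, (enumA A j < m)%N -> (m < enumA A j.+1)%N -> ~ A m].
Proof.
move=> ex.
set p := enumA A j.
have ex' : exists n, `[< A n >] && (p < n)%N.
  by case: ex => n [An pn]; exists n; rewrite pn andbT; apply/asboolP.
case: (ex_minnP ex') => m /andP[/asboolP Am pm] mmin.
pose P := [set n | A n /\ (p < n)%N /\ forall m, (p < m)%N -> (m < n)%N -> ~ A m].
have hP : P m.
  split => //; split => // m' pm' m'm Am'.
  have := mmin m'; rewrite pm' andbT => /(_ (introT (asboolP _) Am')).
  by rewrite leqNgt m'm.
have : P (enumA A j.+1) by exact: (xgetI 0%N hP).
by case=> a [b c].
Qed.

Definition cover j := forall n, A n -> (n <= enumA A j)%N ->
  exists2 l, (0 < l <= j)%N & n = enumA A l.

Lemma enum_ex k j : (`I_k #<= A)%card -> (j < k)%N -> cover j ->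
  exists n, A n /\ (enumA A j < n)%N.
Proof.
move=> hk jk cj.
case: (pselect (exists n, A n /\ (enumA A j < n)%N)) => // hn.
have sub : A `<=` (fun l => enumA A l.+1) @` `I_j.
  move=> n An.
  have nle : (n <= enumA A j)%N.
    by rewrite leqNgt; apply/negP => h; apply: hn; exists n.
  have [l /andP[l0 lj] ->] := cj n An nle.
  exists l.-1; first by rewrite /= (ltn_predK l0).
  by rewrite prednK.
have := card_le_trans hk (card_le_trans (subset_card_le sub) (card_image_le _ _)).
by rewrite card_le_II leqNgt jk.
Qed.

Lemma enum_cover k : (`I_k #<= A)%card -> forall j, (j <= k)%N -> cover j.
Proof.
move=> hk; elim=> [_|j IH jk].
  by move=> n An; rewrite leqn0 => /eqP n0; move: An; rewrite n0.
have cj := IH (ltnW jk).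
have [a b c] := enum_step (enum_ex hk jk cj).
move=> n An nle.
case: (leqP n (enumA A j)) => h.
  have [l /andP[l0 lj] ->] := cj n An h.
  by exists l => //; rewrite l0 (leq_trans lj).
case: (ltngtP n (enumA A j.+1)) => h2.
- by exfalso; apply: (c n h h2).
- by move: nle; rewrite leqNgt h2.
- by exists j.+1 => //; rewrite ltn0Sn leqnn.
Qed.

Lemma enum_K k : (`I_k #<= A)%card -> (0 < k)%N ->
  [/\ A (enumA A k), (enumA A k.-1 < enumA A k)%N &
      forall m, (enumA A k.-1 < m)%N -> (m < enumA A k)%N -> ~ A m].
Proof.
move=> hk k0.
have jk : (k.-1 < k)%N by rewrite prednK.
have := enum_step (enum_ex hk jk (enum_cover hk (ltnW jk))).
by rewrite prednK.
Qed.
End Enum.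
End Helpers.
Import Helpers.
Unset Implicit Arguments.

Theorem proposition4p5 (R : realType) (V : completeNormedModType R)
  (ip : V -> V -> R) (C : set V) (F : V -> V) (F' : V -> V -> V)
  (L sigmah theta eta : R) (x y nu : nat -> V) (lam : nat -> R) :
  is_inner_product ip ->
  C !=set0 -> closed C -> convex_set_V C ->
  monotone_on ip C F ->
  bounded_linear_on C F' -> frechet_deriv_on C F F' -> deriv_continuous_on C F' ->
  0 < L -> deriv_lipschitz_on C F' L ->
  (exists z, C z /\ exists nu0, normal_cone ip C z nu0 /\ F z + nu0 = 0) ->
  0 <= sigmah -> sigmah < 1 / 2 ->
  0 < theta -> theta < (1 - sigmah) * (1 - 2 * sigmah) ->
  2 * thetahat sigmah theta / L < eta ->
  Alg2_run ip C F F' L sigmah theta eta x y nu lam ->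
  (forall k : nat, F (y k) + nu k <> 0) ->
  let tau := tau_param sigmah theta eta L in
  let sigma := 2 * thetahat sigmah theta / (eta * L) in
  let A := setA eta x y lam in
  let K := setK A in
  let i := enumA A in
  sigma < 1 /\
  (forall k, K k ->
     [/\ normal_cone ip C (y (i k)) (nu (i k)),
         `|lam (i k) *: (F (y (i k)) + nu (i k)) + y (i k) - x (i k.-1)|
           <= sigma * `|y (i k) - x (i k.-1)|,
         eta <= lam (i k) * `|y (i k) - x (i k.-1)| &
         x (i k) = x (i k.-1) - (tau * lam (i k)) *: (F (y (i k)) + nu (i k))]) /\
  Alg1_run ip C F (x 0%N) tau sigma eta K
    (fun k => x (i k)) (fun k => y (i k)) (fun k => nu (i k)) (fun k => lam (i k)).
Proof.
move=> hip Cne Ccl hconv hmon hlin hfr hcont L0 hlip _ sh0 sh1 th0 th1 heta HA _.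
move=> tau sigma A K i.
case: HA => [[Cx0 ey0 enu0] [lam1p lam1b] Hstep Hupd].
have [tt0 tt1 tteq] := thetahat_facts sh0 sh1 th0 th1.
have [eta0 tau0 tau1 tauineq] := tau_facts sh0 sh1 th0 th1 L0 heta.
rewrite -/tau in tau0 tau1 tauineq.
set tt := thetahat sigmah theta in tt0 tt1 tteq heta tauineq Hstep sigma *.
pose s k := lam k.+1 *: (F (y k) + nu k) + y k - x k.
pose r k := lam k.+1 *: (F (y k.+1) + nu k.+1) + y k.+1 - x k.
pose P k := [/\ normal_cone ip C (y k) (nu k), 0 < lam k.+1 &
                lam k.+1 * L / 2 * `|s k| <= theta].
pose Q k := normal_cone ip C (y k.+1) (nu k.+1) /\ lam k.+1 * L / 2 * `|r k| <= tt.
have PQ k : P k -> Q k.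
  case=> nc lp inv.
  have [h1 h2] := Hstep k.
  have [T|T] := boolP (lam k.+1 * L / 2 * `|s k| <= tt).
    by have [ey en] := h1 T; rewrite /Q /r ey en; split; [exact: nc | exact: T].
  move/negP: T => T.
  have [nc1 hres] := h2 T.
  split => //.
  set lm := lam k.+1 in lp inv hres *.
  set dd := y k.+1 - y k in hres *.
  have Cyk := nc.1; have Cyk1 := nc1.1.
  have mono := F'mono hip hconv hlin hfr hmon Cyk Cyk1.
  have tay := taylor hip hconv hlin hfr hlip L0 Cyk Cyk1.
  rewrite -/dd in mono tay.
  rewrite /Flin -/dd in hres.
  set rp := lm *: (F (y k) + F' (y k) dd + nu k.+1) + y k.+1 - x k in hres.
  have I1 : rp - s k = lm *: (F' (y k) dd + (nu k.+1 - nu k)) + dd.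
    exact: vI1.
  have ipeq : ip (rp - s k) dd =
      lm * ip (F' (y k) dd) dd + lm * (ip (nu k.+1) dd - ip (nu k) dd) + `|dd| ^+ 2.
    rewrite I1 (ipDl hip) (ipZl hip) (ipDl hip) (ipBl hip) (ipn hip); ring.
  have n1 : 0 <= ip (nu k.+1) dd.
    have := nc1.2 _ Cyk; rewrite -opprB (ipNr hip); lra.
  have n0 : ip (nu k) dd <= 0 := nc.2 _ Cyk1.
  have low : `|dd| ^+ 2 <= ip (rp - s k) dd.
    rewrite ipeq; have := mulr_ge0 (ltW lp) mono.
    have : 0 <= lm * (ip (nu k.+1) dd - ip (nu k) dd) by apply: mulr_ge0; [exact: ltW | lra].
    lra.
  have up : ip (rp - s k) dd <= (sigmah * `|dd| + `|s k|) * `|dd|.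
    apply: le_trans (ip_le hip _ _) _; apply: ler_wpM2r => //.
    by apply: le_trans (ler_normB _ _) _; rewrite lerD2r.
  have dd0 : 0 <= `|dd| := normr_ge0 _.
  have s0 : 0 <= `|s k| := normr_ge0 _.
  have hd : (1 - sigmah) * `|dd| <= `|s k|.
    have [->|dn] := eqVneq `|dd| 0; first by rewrite mulr0.
    have dp : 0 < `|dd| by rewrite lt_def dn dd0.
    have := le_trans low up; rewrite expr2 ler_pM2r // => h; lra.
  have I2 : r k = rp + lm *: (F (y k.+1) - F (y k) - F' (y k) dd) by exact: vI2.
  have hr : `|r k| <= sigmah * `|dd| + lm * (L / 2 * `|dd| ^+ 2).
    rewrite I2; apply: le_trans (ler_normD _ _) _; apply: lerD => //.
    by rewrite normrZ gtr0_norm // ler_wpM2l // ltW.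
  set a := lm * L / 2 * `|dd|.
  have lmL : 0 <= lm * L / 2 by apply: divr_ge0 => //; apply: mulr_ge0; apply: ltW.
  have a0 : 0 <= a by rewrite /a mulr_ge0.
  have q0 : 0 < 1 - sigmah by lra.
  set B := theta / (1 - sigmah) in tteq.
  have aB : a <= B.
    rewrite /B ler_pdivlMr // mulrC; apply: le_trans inv.
    by rewrite /a; have := ler_wpM2l lmL hd; lra.
  apply: le_trans (ler_wpM2l lmL hr) _.
  have -> : lm * L / 2 * (sigmah * `|dd| + lm * (L / 2 * `|dd| ^+ 2)) = sigmah * a + a ^+ 2.
    by rewrite /a; field.
  rewrite tteq; nra.
have PP k : P k -> Q k -> P k.+1.
  case=> nc lp inv [nc1 qb].
  have [u1 u2] := Hupd k.
  have rr : 0 <= `|r k| := normr_ge0 _.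
  have L2 : 0 < L / 2 by rewrite divr_gt0.
  case: (boolP (eta <= lam k.+1 * `|y k.+1 - x k|)) => hA.
    have [ex el] := u1 hA.
    have lp2 : 0 < lam k.+2 by rewrite el mulr_gt0 // subr_gt0.
    split => //.
    have -> : s k.+1 = r k by rewrite /s /r ex el vI3.
    rewrite el.
    have -> : (1 - tau) * lam k.+1 * L / 2 * `|r k| = (1 - tau) * (lam k.+1 * L / 2 * `|r k|) by ring.
    have : (1 - tau) * (lam k.+1 * L / 2 * `|r k|) <= (1 - tau) * tt.
      by apply: ler_wpM2l => //; rewrite subr_ge0 ltW.
    have : (1 - tau) * tt <= tt by nra.
    lra.
  move/negP: hA => hA.
  have [ex el] := u2 hA.
  move/negP: hA; rewrite -ltNge => hA.
  have m0 : 0 < 1 - tau by rewrite subr_gt0.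
  set c := (1 - tau)^-1.
  have c0 : 0 < c by rewrite invr_gt0.
  have c1 : 1 <= c.
    have : c * (1 - tau) = 1 by rewrite /c mulVf // gt_eqF.
    nra.
  have lp2 : 0 < lam k.+2 by rewrite el divr_gt0.
  split => //.
  have es : s k.+1 = c *: r k + (1 - c) *: (y k.+1 - x k).
    by rewrite /s /r ex el vI4.
  set w := y k.+1 - x k in es hA.
  have hs : `|s k.+1| <= c * `|r k| + (c - 1) * `|w|.
    rewrite es; apply: le_trans (ler_normD _ _) _.
    have e1 : `|1 - c| = c - 1 by rewrite ler0_norm ?opprB // subr_le0.
    by rewrite !normrZ (gtr0_norm c0) e1.
  have cc : 0 <= c - 1 by rewrite subr_ge0.
  set Xr := lam k.+1 * L / 2 * `|r k| in qb.
  set Xw := lam k.+1 * L / 2 * `|w|.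
  have hXw : Xw <= eta * (L / 2).
    rewrite /Xw; have := ler_wpM2r (ltW L2) (ltW hA); lra.
  have lc0 : 0 <= lam k.+1 * c * L / 2.
    by apply: divr_ge0 => //; apply: ltW; apply: mulr_gt0 => //; exact: mulr_gt0.
  have st1 : lam k.+2 * L / 2 * `|s k.+1| <= c * (c * Xr + (c - 1) * Xw).
    rewrite el; have := ler_wpM2l lc0 hs.
    have -> : lam k.+1 * c * L / 2 * (c * `|r k| + (c - 1) * `|w|) = c * (c * Xr + (c - 1) * Xw).
      by rewrite /Xr /Xw; ring.
    by [].
  have st2 : c * (c * Xr + (c - 1) * Xw) <= c * (c * tt + (c - 1) * (eta * (L / 2))).
    apply: ler_wpM2l; first exact: ltW.
    apply: lerD; apply: ler_wpM2l => //; exact: ltW.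
  have st3 : c * (c * tt + (c - 1) * (eta * (L / 2))) = (tt + tau * eta * L / 2) * c ^+ 2.
    by rewrite /c; field; rewrite gt_eqF.
  have st4 : (tt + tau * eta * L / 2) * c ^+ 2 <= theta * (1 - tau) ^+ 2 * c ^+ 2.
    by apply: ler_wpM2r => //; rewrite sqr_ge0.
  have st5 : theta * (1 - tau) ^+ 2 * c ^+ 2 = theta.
    by rewrite /c; field; rewrite gt_eqF.
  lra.
have P0 : P 0%N.
  split => //.
    by rewrite /normal_cone ey0 enu0; split => // z _; rewrite (ip0l hip).
  rewrite /s enu0 addr0 {2}ey0 addrK normrZ gtr0_norm //.
  have L2 : 0 <= L / 2 by rewrite divr_ge0 // ltW.
  have := ler_wpM2l L2 lam1b.
  have -> : L / 2 * (2 * theta / L) = theta by field; rewrite gt_eqF.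
  have -> : L / 2 * (lam 1%N ^+ 2 * `|F (y 0%N)|) = lam 1%N * L / 2 * (lam 1%N * `|F (y 0%N)|).
    by rewrite expr2; field.
  by [].
have Pall k : P k by elim: k => // k IH; exact: PP k IH (PQ k IH).
have Qall k : Q k := PQ k (Pall k).
have eL : 0 < eta * L by rewrite mulr_gt0.
have key k : eta <= lam k.+1 * `|y k.+1 - x k| -> `|r k| <= sigma * `|y k.+1 - x k|.
  move=> hk; have [_ qb] := Qall k; have [_ lp _] := Pall k.
  rewrite /sigma mulrAC ler_pdivlMr //.
  have r0 : 0 <= `|r k| * L by rewrite mulr_ge0 // ltW.
  have w0 : 0 <= 2 * `|y k.+1 - x k| by rewrite mulr_ge0.
  have h1 := ler_wpM2l r0 hk.
  have h2 := ler_wpM2l w0 qb.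
  lra.
have sig1 : sigma < 1.
  by rewrite /sigma ltr_pdivrMr // mul1r; rewrite ltr_pdivrMr // in heta.
have A0 : ~ A 0%N by case.
have main k : K k -> [/\ 0 < lam (i k), normal_cone ip C (y (i k)) (nu (i k)),
         `|lam (i k) *: (F (y (i k)) + nu (i k)) + y (i k) - x (i k.-1)|
           <= sigma * `|y (i k) - x (i k.-1)|,
         eta <= lam (i k) * `|y (i k) - x (i k.-1)| &
         x (i k) = x (i k.-1) - (tau * lam (i k)) *: (F (y (i k)) + nu (i k))].
  case=> k1 hk.
  have [Ai lt btw] := enum_K A0 hk k1.
  have ik0 : (0 < i k)%N by case: Ai.
  set j := (i k).-1.
  have ij : i k = j.+1 by rewrite prednK.
  have gen n : (i k.-1 + n < i k)%N -> x (i k.-1 + n)%N = x (i k.-1).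
    elim: n => [|n IH] h; first by rewrite addn0.
    have hn : ~ A (i k.-1 + n.+1)%N by apply: btw; [rewrite addnS ltnS leq_addr | by []].
    rewrite addnS in hn h *.
    have [_ u2] := Hupd (i k.-1 + n)%N.
    have nh : ~ (eta <= lam (i k.-1 + n).+1 * `|y (i k.-1 + n).+1 - x (i k.-1 + n)%N|).
      by move=> H; apply: hn; split.
    have [-> _] := u2 nh.
    by apply: IH; apply: ltn_trans h.
  have xj : x j = x (i k.-1).
    have le1 : (i k.-1 <= j)%N by rewrite -ltnS -ij.
    have := gen (j - i k.-1)%N; rewrite subnKC //; apply.
    by rewrite ij.
  rewrite -xj ij.
  have [_ u2] := Hupd j.
  have hA : eta <= lam j.+1 * `|y j.+1 - x j|.
    by case: Ai => _; rewrite -/(i k) ij.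
  have [_ lp _] := Pall j.
  have [nc1 _] := Qall j.
  have [ex _] := (Hupd j).1 hA.
  by split => //; apply: key.
split => //.
split.
  by move=> k /main [].
split => //.
- by rewrite tau0 tau1.
- rewrite sig1 andbT /sigma; apply: divr_ge0; [by rewrite mulr_ge0 // ltW | exact: ltW].
Qed.
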